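(* Let $T$ be a set of even size $t$ and let $\mathcal{B}\subset T^{(t/2)}$. Then for any $\alpha\in[4/t,1]$ there exists $\mathcal{E}\subset\mathcal{B}$ with $|\mathcal{E}|>|\mathcal{B}|-\alpha\binom{t}{t/2}$ such that every $E\in\mathcal{E}$ has at least $\alpha t^2/2^5$ neighbours in $\mathcal{E}$.
   Context: For a set $T$, $T^{(k)}$ denotes the set of $k$-element subsets of $T$. Two sets $A_1,A_2\in T^{(t/2)}$ are neighbours if $|A_1\triangle A_2|=2$. *)

(* Defs.v *)
From mathcomp Require Import all_boot all_order all_algebra.
Set Implicit Arguments. Unset Strict Implicit. Unset Printing Implicit Defensive.
Import Order.TTheory GRing.Theory Num.Theory.

Definition symdiff (T : finType) (A B : {set T}) : {set T} := (A :\: B) :|: (B :\: A).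

Definition neighbours (T : finType) (A1 A2 : {set T}) : bool := #|symdiff A1 A2| == 2.

Definition nbrs_in (T : finType) (E : {set {set T}}) (X : {set T}) : {set {set T}} :=
  [set Y in E | neighbours X Y].

(* Main.v *)
Require Import Defs.
From mathcomp Require Import all_boot all_order all_algebra.
From mathcomp Require Import zify ring lra.
Import Order.TTheory GRing.Theory Num.Theory.

Module Helpers.
Set Implicit Arguments. Unset Strict Implicit.

Lemma sum_ind (I : finType) (A : {set I}) (q : pred I) :
  (\sum_(i in A) (q i : nat))%N = #|[set i in A | q i]|.
Proof.
rewrite -sum1_card big_mkcond [RHS]big_mkcond /=.
apply: eq_bigr => i _; rewrite inE; by case: (i \in A); case: (q i).
Qed.

Section Helpers.
Variable T : finType.
Implicit Types (X Y S : {set T}) (E F D : {set {set T}}).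

Lemma nbC X Y : neighbours X Y = neighbours Y X.
Proof. by rewrite /neighbours /symdiff setUC. Qed.
Lemma nbxx X : neighbours X X = false.
Proof. by rewrite /neighbours /symdiff setDv setU0 cards0. Qed.

Definition deg E X := (\sum_(Z in E) neighbours X Z)%N.
Definition Q E := (\sum_(Y in E) deg E Y)%N.

Lemma degE E X : deg E X = #|nbrs_in E X|.
Proof. by rewrite /deg sum_ind. Qed.

Lemma deg_setD1 E X Y : X \in E -> deg E Y = (neighbours Y X + deg (E :\ X) Y)%N.
Proof. move=> XE; by rewrite /deg (big_setD1 X XE). Qed.

Lemma Q_setD1 E X : X \in E -> Q E = ((deg E X).*2 + Q (E :\ X))%N.
Proof.
move=> XE.
rewrite /Q (big_setD1 X XE) /=.
rewrite (eq_bigr (fun Y => neighbours X Y + deg (E:\X) Y)%N); last first.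
  by move=> Y _; rewrite (deg_setD1 _ XE) nbC.
rewrite big_split /=.
have -> : (\sum_(i in E :\ X) neighbours X i)%N = deg E X.
  by rewrite [in RHS](deg_setD1 _ XE) nbxx add0n.
by rewrite addnA addnn.
Qed.

Lemma deg_sub E F Y : E \subset F -> (deg E Y <= deg F Y)%N.
Proof.
move=> sEF; rewrite /deg [X in (_ <= X)%N](big_setID E) /=.
by rewrite (setIidPr sEF) leq_addr.
Qed.

Lemma Q_split E F : E \subset F -> (Q (F :\: E) + Q E <= Q F)%N.
Proof.
move=> sEF; rewrite /Q [X in (_ <= X)%N](big_setID E) /= (setIidPr sEF) addnC.
apply: leq_add; apply: leq_sum => Y _; apply: deg_sub => //.
exact: subsetDl.
Qed.

End Helpers.

Section Count.
Variable T : finType.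
Implicit Types (X Y S : {set T}) (E F D : {set {set T}}).

Lemma pair_bound h X Y : (0 < h)%N -> #|X| = h -> #|Y| = h ->
  ('C(#|X :&: Y|, h.-1) <= (X == Y) * h + neighbours X Y)%N.
Proof.
move=> h0 hX hY.
case: eqP => [<-|neq].
  rewrite setIid hX nbxx; case: h h0 {hX hY} => // h _; by rewrite binSn /= mul1n addn0.
rewrite mul0n add0n.
have le1 : (#|X :&: Y| <= h)%N by rewrite -hX subset_leq_card // subsetIl.
have ne : #|X :&: Y| != h.
  apply/negP => /eqP eqh; apply: neq.
  have e1 : X :&: Y == X.
    by rewrite eqEcard subsetIl hX eqh leqnn.
  have e2 : X :&: Y == Y.
    by rewrite eqEcard subsetIr hY eqh leqnn.
  by rewrite -(eqP e1); exact: (eqP e2).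
case: (ssrnat.ltngtP #|X :&: Y| h.-1) => [lt|gt|Heq].
- by rewrite bin_small.
- exfalso; move: gt ne le1; lia.
- rewrite Heq binn /neighbours /symdiff cardsU !cardsD.
  have -> : (X :\: Y) :&: (Y :\: X) = set0.
    apply/setP => z; rewrite !inE; by case: (z \in X); case: (z \in Y).
  rewrite cards0 [Y :&: X]setIC Heq hX hY subn0; apply/eqP; lia.
Qed.

Variable D : {set {set T}}.
Variable h : nat.
Hypothesis h0 : (0 < h)%N.
Hypothesis hD : forall X, X \in D -> #|X| = h.

Definition SS := [set S : {set T} | #|S| == h.-1].
Definition cnt S := (\sum_(X in D) (S \subset X : nat))%N.

Lemma inner X : (\sum_(S in SS) (S \subset X : nat))%N = 'C(#|X|, h.-1).
Proof.
rewrite sum_ind -cards_draws; apply: eq_card => S; rewrite !inE andbC //.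
Qed.

Lemma sum_cnt : (\sum_(S in SS) cnt S)%N = (#|D| * h)%N.
Proof.
rewrite /cnt exchange_big /= -sum_nat_const; apply: eq_bigr => X XD.
rewrite inner hD //; move: h0; case: (h) => // h' _; by rewrite binSn.
Qed.

Lemma sum_cnt2 : (\sum_(S in SS) cnt S ^ 2 <= #|D| * h + Q D)%N.
Proof.
have E1 : forall S, (cnt S ^ 2 = \sum_(X in D) \sum_(Y in D) (S \subset X :&: Y : nat))%N.
  move=> S; rewrite -mulnn /cnt big_distrl /=; apply: eq_bigr => X _.
  rewrite big_distrr /=; apply: eq_bigr => Y _; rewrite subsetI.
  by case: (S \subset X); case: (S \subset Y).
rewrite (eq_bigr _ (fun S _ => E1 S)) exchange_big /=.
under eq_bigr => X _ do rewrite exchange_big /=.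
apply: (@leq_trans (\sum_(X in D) \sum_(Y in D) ((X == Y) * h + neighbours X Y))%N).
  apply: leq_sum => X XD; apply: leq_sum => Y YD; rewrite inner; apply: pair_bound => //; exact: hD.
rewrite /Q -sum_nat_const -big_split /=; apply: eq_leq.
apply: eq_bigr => X XD; rewrite big_split /= /deg (big_setD1 X XD) eqxx mul1n.
rewrite big1 /=; first by rewrite addn0.
by move=> Y; rewrite !inE => /andP [nYX _]; rewrite eq_sym (negPf nYX).
Qed.

Lemma card_SS : #|SS| = 'C(#|T|, h.-1).
Proof. exact: card_draws. Qed.

End Count.

End Helpers.
Import Helpers.

Local Open Scope ring_scope.

Lemma cs (R : realFieldType) (I : finType) (A : {set I}) (F : I -> R) :
  (\sum_(i in A) F i) ^+ 2 <= #|A|%:R * \sum_(i in A) F i ^+ 2.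
Proof.
set S := \sum_(i in A) F i; set S2 := \sum_(i in A) F i ^+ 2.
have H : 0 <= \sum_(i in A) \sum_(j in A) (F i - F j) ^+ 2.
  by apply: sumr_ge0 => i _; apply: sumr_ge0 => j _; apply: sqr_ge0.
have E1 : forall i, \sum_(j in A) (F i - F j) ^+ 2 =
    #|A|%:R * F i ^+ 2 + (- (2 * F i)) * S + S2.
  move=> i.
  rewrite (eq_bigr (fun j => F i ^+2 + (-(2 * F i)) * F j + F j ^+2)); last by move=> j _; ring.
  rewrite !big_split /= sumr_const -mulr_sumr -/S -/S2 -[_ *+ #|A|]mulr_natl; ring.
rewrite (eq_bigr _ (fun i _ => E1 i)) in H.
rewrite (eq_bigr (fun i => #|A|%:R * F i ^+ 2 + (- (2 * S)) * F i + S2)) in H; last by move=> i _; ring.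
rewrite !big_split /= sumr_const -!mulr_sumr -/S -/S2 -[_ *+ #|A|]mulr_natl in H.
nra.
Qed.

Theorem lemma1 (R : realFieldType) (T : finType) (t : nat)
  (ht : #|T| = t) (ht_even : ~~ odd t) (ht_pos : (0 < t)%N)
  (B : {set {set T}}) (hB : forall A, A \in B -> #|A| = t./2)
  (alpha : R) (ha1 : 4 / t%:R <= alpha) (ha2 : alpha <= 1) :
  exists E : {set {set T}},
    [/\ E \subset B,
        #|B|%:R - alpha * ('C(t, t./2))%:R < (#|E|%:R : R)
      & forall X, X \in E ->
          alpha * (t ^ 2)%:R / (2 ^ 5)%:R <= (#|nbrs_in E X|%:R : R)].
Proof.
set h := t./2.
have th : t = (h + h)%N.
  by move: (odd_double_half t); rewrite (negPf ht_even) add0n -addnn => ->.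
have h0 : (0 < h)%N by move: ht_pos; rewrite th; lia.
have tR : t%:R = 2 * h%:R :> R by rewrite th natrD; ring.
have hR1 : 1 <= h%:R :> R by rewrite ler1n.
have tpos : 0 < t%:R :> R by rewrite ltr0n.
have aH : 2 <= alpha * h%:R.
  by move: ha1; rewrite ler_pdivrMr // tR => H; nra.
set d := alpha * (t ^ 2)%:R / (2 ^ 5)%:R.
have dE : d = alpha * h%:R ^+ 2 / 8.
  by rewrite /d natrX tR natrX /=; field.
pose f := fun E : {set {set T}} => (Q E)%:R - 2 * d * #|E|%:R : R.
have [E sEB Emax] : exists2 E : {set {set T}}, E \subset B & forall F : {set {set T}}, F \subset B -> f F <= f E.
  case: (@arg_maxP _ R _ B (fun E => E \subset B) f (subxx B)) => E sEB H.
  by exists E.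
exists E; split => //; last first.
  move=> X XE.
  have := Emax (E :\ X) (subset_trans (subsetDl E [set X]) sEB).
  rewrite /f (Q_setD1 XE) (cardsD1 X E) XE -degE -addnn !natrD.
  move=> H; have e1 : ((true : nat)%:R : R) = 1 by []. rewrite e1 in H; lra.
set D := B :\: E.
have QDE := Q_split sEB.
have cardB : #|B| = (#|E| + #|D|)%N by rewrite -(cardsID E B) (setIidPr sEB).
have fB := Emax B (subxx B).
have qd : (Q D)%:R <= 2 * d * #|D|%:R :> R.
  move: fB; rewrite /f cardB natrD.
  have : (Q D + Q E)%:R <= (Q B)%:R :> R by rewrite ler_nat.
  rewrite natrD => H1 H2; lra.
have hD : forall X, X \in D -> #|X| = h.
  by move=> X; rewrite inE => /andP [_ XB]; apply: hB.
have s1 := sum_cnt h0 hD.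
have s2 := sum_cnt2 h0 hD.
have cs1 := @cs R _ (SS T h) (fun S => (cnt D S)%:R : R).
rewrite -natr_sum s1 card_SS ht in cs1.
have : (\sum_(S in SS T h) (cnt D S)%:R ^+ 2 : R) <= (#|D| * h + Q D)%:R.
  by rewrite -(eq_bigr _ (fun S _ => natrX R (cnt D S) 2)) -natr_sum ler_nat.
move=> s2R.
set N := 'C(t, h.-1). set C := 'C(t, h).
have NC : (N <= C)%N.
  have e := mul_bin_left t h.-1.
  rewrite prednK // in e.
  have : (h.+1 * N <= h.+1 * C)%N.
    have -> : (h.+1 * N = h * C)%N by rewrite e /N; congr (_ * _)%N; lia.
    by rewrite leq_mul2r leqnSn orbT.
  by rewrite leq_pmul2l.
have C1 : (1 <= C)%N by rewrite bin_gt0 th leq_addr.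
have NCR : N%:R <= C%:R :> R by rewrite ler_nat.
have C1R : 1 <= C%:R :> R by rewrite ler1n.
rewrite cardB natrD.
move: cs1 s2R; rewrite !natrD !natrM.
set n := #|D|%:R. set hr := h%:R. set q := (Q D)%:R. set Nr := N%:R. set Cr := C%:R.
set S2 := \sum_(_ in _) _.
move=> cs1 s2R.
have n0 : 0 <= n by rewrite ler0n.
have q0 : 0 <= q by rewrite ler0n.
have N0 : 0 <= Nr by rewrite ler0n.
have F1 : (n * hr) ^+ 2 <= Nr * (n * hr + q).
  apply: (le_trans cs1); by apply: ler_wpM2l.
rewrite dE -/hr in qd.
have a0 : 0 < alpha by have := ler_wpM2l N0 qd; nra.
suff Hn : n < alpha * Cr by lra.
have [nz|np] := eqVneq n 0.
  rewrite nz; nra.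
have np' : 0 < n by rewrite lt0r np n0.
have F2 : n * hr ^+ 2 <= Nr * (hr + alpha * hr ^+ 2 / 4).
  have F1' : n * (n * hr ^+ 2) <= n * (Nr * (hr + alpha * hr ^+ 2 / 4)) by have := ler_wpM2l N0 qd; nra.
  by rewrite ler_pM2l in F1'.
have G1 : hr + alpha * hr ^+ 2 / 4 <= 3 / 4 * (alpha * hr ^+ 2) by nra.
have G3 : 0 < alpha * hr ^+ 2 by nra.
have G2 : Nr * (hr + alpha * hr ^+ 2 / 4) <= Cr * (3 / 4 * (alpha * hr ^+ 2)).
  apply: (le_trans (ler_wpM2l N0 G1)); apply: ler_wpM2r => //; lra.
have F3 : n * hr ^+ 2 < alpha * Cr * hr ^+ 2 by nra.
have hp : 0 < hr ^+ 2 by have := ler_wpM2l N0 qd; nra.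
by rewrite ltr_pM2r in F3.
Qed.
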